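(* Suppose $\mathrm{Hom}_R(M,X)\neq0$ for every nonzero module $X\in\sigma[M]$, and let $P$ be a proper $M$-ideal of $M$. Then $P$ is a prime $M$-ideal if and only if $P$ is a Beachy-prime $M$-ideal.
   Context: $R$ is a ring with identity, modules are unital left $R$-modules, $M$ is a fixed left $R$-module; $\sigma[M]$ is the full subcategory of $R$-modules isomorphic to submodules of $M$-generated modules. $\mathrm{Ann}_M(X):=\bigcap_{f\in\mathrm{Hom}_R(M,X)}\ker f$. A submodule $N\le M$ is an $M$-ideal if $N$ is the intersection of the kernels of all homomorphisms from $M$ into modules of some class $\mathcal C$. For $N\le M$ and a module $X$, $N\cdot X$ is the intersection of the kernels of all homomorphisms $X\to W$ where $W$ ranges over modules with $f(N)=0$ for all $f\in\mathrm{Hom}_R(M,W)$ (for $Y\le X$, $N\cdot Y$ is formed regarding $Y$ as a module). A module $X\neq 0$ is an $M$-prime module if for all $N\le M$, $Y\le X$, $N\cdot Y=0$ implies $N\cdot X=0$ or $Y=0$. A proper $M$-ideal $P$ is a prime $M$-ideal if $P=\mathrm{Ann}_M(X)$ for some $M$-prime module $X$. A module $X$ is Beachy-$M$-prime if $\mathrm{Hom}_R(M,X)\ne0$ and $\mathrm{Ann}_M(Y)=\mathrm{Ann}_M(X)$ for every submodule $Y\le X$ with $\mathrm{Hom}_R(M,Y)\neq0$. A proper $M$-ideal $P$ is a Beachy-prime $M$-ideal if $P=\mathrm{Ann}_M(X)$ for some Beachy-$M$-prime module $X\in\sigma[M]$. *)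

(* Defs.v *)
(* Left R-modules are [lmodType R] over a (possibly zero) ring
   with identity [R : pzRingType]; R-homomorphisms are [{linear U -> V}].
   Subsets/submodules are Prop-valued predicates. *)
From HB Require Import structures.
From mathcomp Require Import all_boot all_order all_algebra.
Unset Printing Implicit Defensive.
Import GRing.Theory.
Local Open Scope ring_scope.

Section ModuleTheory.
Variable R : pzRingType.

Definition is_submod (X : lmodType R) (Y : X -> Prop) : Prop :=
  Y 0 /\ (forall y z, Y y -> Y z -> Y (y + z)) /\ (forall (a : R) y, Y y -> Y (a *: y)).

(* a (possibly non-total) function g : X -> W that is an R-homomorphism on the
   submodule Y; restricted to Y these are exactly the homomorphisms Y -> W *)
Definition hom_on (X W : lmodType R) (Y : X -> Prop) (g : X -> W) : Prop :=
  (forall y z, Y y -> Y z -> g (y + z) = g y + g z) /\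
  (forall (a : R) y, Y y -> g (a *: y) = a *: g y).

Definition M_generated (M G : lmodType R) : Prop :=
  forall g : G, exists (n : nat) (fs : 'I_n -> {linear M -> G}) (ms : 'I_n -> M),
    g = \sum_(i < n) fs i (ms i).

Definition in_sigma (M X : lmodType R) : Prop :=
  exists (G : lmodType R) (h : {linear X -> G}), M_generated M G /\ injective h.

Definition AnnM (M X : lmodType R) : M -> Prop :=
  fun m => forall f : {linear M -> X}, f m = 0.

(* Ann_M(Y) for a submodule Y of X (homs M -> Y = homs M -> X landing in Y) *)
Definition AnnM_sub (M X : lmodType R) (Y : X -> Prop) : M -> Prop :=
  fun m => forall f : {linear M -> X}, (forall m', Y (f m')) -> f m = 0.

Definition hom_nonzero_sub (M X : lmodType R) (Y : X -> Prop) : Prop :=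
  exists (f : {linear M -> X}) (m : M), (forall m', Y (f m')) /\ f m <> 0.

Definition hom_nonzero (M X : lmodType R) : Prop :=
  exists (f : {linear M -> X}) (m : M), f m <> 0.

Definition is_M_ideal (M : lmodType R) (N : M -> Prop) : Prop :=
  exists C : lmodType R -> Prop,
    forall m, N m <-> (forall (X : lmodType R), C X -> forall f : {linear M -> X}, f m = 0).

Definition proper_Msub (M : lmodType R) (N : M -> Prop) : Prop := exists m, ~ N m.

Definition kills (M : lmodType R) (N : M -> Prop) (W : lmodType R) : Prop :=
  forall (f : {linear M -> W}) n, N n -> f n = 0.

Definition dotM (M : lmodType R) (N : M -> Prop) (X : lmodType R) : X -> Prop :=
  fun x => forall W : lmodType R, kills M N W -> forall g : {linear X -> W}, g x = 0.

Definition dotM_sub (M : lmodType R) (N : M -> Prop) (X : lmodType R) (Y : X -> Prop)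
  : X -> Prop :=
  fun y => Y y /\ forall W : lmodType R, kills M N W ->
    forall g : X -> W, hom_on X W Y g -> g y = 0.

Definition M_prime_module (M X : lmodType R) : Prop :=
  (exists x : X, x <> 0) /\
  forall (N : M -> Prop) (Y : X -> Prop), is_submod M N -> is_submod X Y ->
    (forall y, dotM_sub M N X Y y -> y = 0) ->
    (forall x : X, dotM M N X x -> x = 0) \/ (forall y, Y y -> y = 0).

Definition prime_M_ideal (M : lmodType R) (P : M -> Prop) : Prop :=
  is_M_ideal M P /\ proper_Msub M P /\
  exists X : lmodType R, M_prime_module M X /\ forall m, P m <-> AnnM M X m.

Definition Beachy_M_prime (M X : lmodType R) : Prop :=
  hom_nonzero M X /\
  forall Y : X -> Prop, is_submod X Y -> hom_nonzero_sub M X Y ->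
    forall m, AnnM_sub M X Y m <-> AnnM M X m.

Definition Beachy_prime_M_ideal (M : lmodType R) (P : M -> Prop) : Prop :=
  is_M_ideal M P /\ proper_Msub M P /\
  exists X : lmodType R, in_sigma M X /\ Beachy_M_prime M X /\
    forall m, P m <-> AnnM M X m.

End ModuleTheory.

(* Main.v *)
Require Import Defs.
From HB Require Import structures.
From mathcomp Require Import all_boot all_order all_algebra.
From mathcomp Require Import boolp.
From Stdlib Require Import Classical.
Import GRing.Theory.
Local Open Scope ring_scope.
Set Implicit Arguments.
Unset Strict Implicit.

Section Lin.
Variables (R : pzRingType) (U V : lmodType R) (f : U -> V) (hf : linear f).
Definition mkLin_fun := f.
HB.instance Definition _ := GRing.isLinear.Build R U V *:%R mkLin_fun hf.
Definition mkLin : {linear U -> V} := mkLin_fun.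
Lemma mkLinE u : mkLin u = f u. Proof. by []. Qed.
End Lin.

Section Sub.
Variables (R : pzRingType) (X : lmodType R) (S : X -> Prop) (hS : is_submod R X S).
Definition Sp : pred X := fun x => `[< S x >].
Definition subT_ (_ : is_submod R X S) := {x : X | Sp x}.
Local Notation subT := (subT_ hS).
HB.instance Definition _ := [isSub of subT for @sval X Sp].
HB.instance Definition _ := [Choice of subT by <:].
Lemma Sp_closed : subsemimod_closed Sp.
Proof.
case: hS => h0 [hD hZ]; split; first split.
- exact/asboolP.
- by move=> u v /asboolP hu /asboolP hv; apply/asboolP; apply: hD.
- by move=> a u /asboolP hu; apply/asboolP; apply: hZ.
Qed.
HB.instance Definition _ := GRing.SubChoice_isSubLmodule.Build R X Sp subT Sp_closed.
Definition subv (t : subT) : X := val t.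
Lemma subv_lin : linear subv.
Proof. by move=> a u v; rewrite /subv /= . Qed.
Definition subvL : {linear subT -> X} := mkLin subv_lin.
Lemma subvLE t : subvL t = subv t. Proof. by []. Qed.
Lemma subv_inj : injective subv.
Proof. exact: val_inj. Qed.
Lemma subvP t : S (subv t).
Proof. by case: t => x /= hx; apply/asboolP. Qed.
Lemma subv0 : subv 0 = 0.
Proof. by rewrite -subvLE linear0. Qed.
Definition mkS (x : X) (h : S x) : subT := exist _ x (asboolT h).
Lemma mkSE x (h : S x) : subv (mkS h) = x. Proof. by []. Qed.
Definition projS (x : X) : subT :=
  match pselect (S x) with left h => mkS h | right _ => 0 end.
Lemma projSE x : S x -> subv (projS x) = x.
Proof. by rewrite /projS; case: pselect. Qed.
Lemma projS_hom : hom_on R X subT S projS.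
Proof.
case: hS => h0 [hD hZ]; split.
- move=> y z hy hz; apply: subv_inj.
  rewrite projSE; last by apply: hD.
  by rewrite -[subv (_ + _)]subvLE linearD !subvLE !projSE.
- move=> a y hy; apply: subv_inj.
  rewrite projSE; last by apply: hZ.
  by rewrite -[subv (_ *: _)]subvLE linearZ !subvLE !projSE.
Qed.
Section Lift.
Variables (M : lmodType R) (f : {linear M -> X}) (hf : forall m, S (f m)).
Definition lift_fun (m : M) : subT := mkS (hf m).
Lemma lift_lin : linear lift_fun.
Proof.
move=> a u v; apply: subv_inj.
by rewrite -[subv (_ + _)]subvLE linearP !subvLE !mkSE linearP.
Qed.
Definition liftL : {linear M -> subT} := mkLin lift_lin.
Lemma liftLE m : subv (liftL m) = f m. Proof. by []. Qed.
End Lift.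
End Sub.

Section Gen.
Variable R : pzRingType.

Lemma comp_lin (A B C : lmodType R) (f : {linear A -> B}) (g : {linear B -> C}) :
  linear (fun a => g (f a)).
Proof. by move=> a u v; rewrite !linearP. Qed.

Lemma comp_hom_lin (A X W : lmodType R) (Y : X -> Prop) (hY : is_submod R X Y)
  (f : {linear A -> X}) (hf : forall a, Y (f a)) (g : X -> W) (hg : hom_on R X W Y g) :
  linear (fun a => g (f a)).
Proof.
case: hY => _ [hD hZ]; case: hg => gD gZ.
move=> a u v; rewrite linearP gD ?gZ //; try apply: hZ; exact: hf.
Qed.

Lemma dot_of_kill (M X : lmodType R) (N : M -> Prop) (f : {linear M -> X}) n :
  N n -> dotM R M N X (f n).
Proof.
move=> Nn W kW g.
have := kW (mkLin (comp_lin f g)) n Nn; by rewrite mkLinE.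
Qed.

Lemma ann_submod (M X : lmodType R) (Y : X -> Prop) : is_submod R M (AnnM_sub R M X Y).
Proof.
split; [|split].
- by move=> f _; rewrite linear0.
- by move=> y z hy hz f hf; rewrite linearD (hy f hf) (hz f hf) addr0.
- by move=> a y hy f hf; rewrite linearZ_LR (hy f hf) scaler0.
Qed.

Definition Tr (M X : lmodType R) (x : X) : Prop :=
  exists (n : nat) (fs : 'I_n -> {linear M -> X}) (ms : 'I_n -> M),
    x = \sum_(i < n) fs i (ms i).
Arguments Tr : clear implicits.

Lemma zero_lin (A B : lmodType R) : linear (fun _ : A => (0 : B)).
Proof. by move=> a u v; rewrite scaler0 addr0. Qed.

Lemma Tr_submod (M X : lmodType R) : is_submod R X (Tr M X).
Proof.
split; [|split].
- by exists 0%N, (fun _ => mkLin (@zero_lin M X)), (fun _ => 0); rewrite big_ord0.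
- move=> y z [n1 [f1 [m1 ->]]] [n2 [f2 [m2 ->]]].
  exists (n1 + n2)%N.
  exists (fun i => match split i with inl j => f1 j | inr j => f2 j end).
  exists (fun i => match split i with inl j => m1 j | inr j => m2 j end).
  rewrite big_split_ord /=; congr (_ + _); apply: eq_bigr => i _.
  + by rewrite -[lshift n2 i]/(unsplit (inl i)) unsplitK.
  + by rewrite -[rshift n1 i]/(unsplit (inr i)) unsplitK.
- move=> a y [n [fs [ms ->]]]; exists n, fs, (fun i => a *: ms i).
  rewrite scaler_sumr; apply: eq_bigr => i _; by rewrite linearZ_LR.
Qed.

Lemma Tr_gen (M X : lmodType R) (f : {linear M -> X}) m : Tr M X (f m).
Proof. by exists 1%N, (fun _ => f), (fun _ => m); rewrite big_ord1. Qed.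

End Gen.
Arguments Tr {R} M X x.

Unset Implicit Arguments.
Set Strict Implicit.

Theorem proposition4p1 (R : pzRingType) (M : lmodType R)
  (hM : forall X : lmodType R, in_sigma R M X -> (exists x : X, x <> 0) -> hom_nonzero R M X)
  (P : M -> Prop) (hP : is_M_ideal R M P) (hPp : proper_Msub R M P) :
  prime_M_ideal R M P <-> Beachy_prime_M_ideal R M P.
Proof.
have idl : forall (A : lmodType R), linear (fun a : A => a) by move=> A a u v.
split.
- case=> _ [_ [X [[Xnz Xpr] hPX]]].
  pose hT := Tr_submod M X.
  pose T := subT_ hT.
  have annXT : forall m, AnnM R M X m -> AnnM R M T m.
  { move=> m hm F; apply: subv_inj; rewrite subv0.
    have := hm (mkLin (comp_lin F (subvL hT))); by rewrite mkLinE subvLE. }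
  have annTX : forall m, AnnM R M T m -> AnnM R M X m.
  { move=> m hm f.
    by rewrite -(liftLE hT (Tr_gen f) m) (hm (liftL hT (Tr_gen f))) subv0. }
  split; [exact hP | split; [exact hPp |]].
  exists T; split; [|split].
  + exists T, (mkLin (idl T)); split => //.
    move=> g; have [n [fs [ms e]]] := subvP g.
    exists n, (fun i => liftL hT (Tr_gen (fs i))), ms.
    apply: subv_inj; rewrite e -[subv (\sum_i _)]subvLE linear_sum.
    by apply: eq_bigr => i _; rewrite subvLE liftLE.
  + split.
    * have [m hm] := hPp.
      have : ~ AnnM R M X m by move=> h; apply: hm; apply/hPX.
      move/not_all_ex_not => [f hf]; exists (liftL hT (Tr_gen f)), m.
      move=> h0; apply: hf; by rewrite -(liftLE hT (Tr_gen f) m) h0 subv0.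
    * move=> Y hY [f0 [m0 [hf0Y hf0]]] m; split; last first.
      { move=> hm f _; exact: hm. }
      move=> hA; apply: annXT.
      pose N := AnnM_sub R M T Y.
      pose Y' := fun x : X => exists t, Y t /\ subv t = x.
      have hY' : is_submod R X Y'.
      { case: hY => h0 [hD hZ]; split; [|split].
        - by exists 0; split; [|exact: subv0].
        - move=> y z [t1 [h1 <-]] [t2 [h2 <-]]; exists (t1 + t2); split; first exact: hD.
          by rewrite -[subv (t1 + t2)]subvLE linearD !subvLE.
        - move=> a y [t [h <-]]; exists (a *: t); split; first exact: hZ.
          by rewrite -[subv (_ *: _)]subvLE linearZ_LR !subvLE. }
      have hYT : forall x, Y' x -> Tr M X x by move=> x [t [_ <-]]; exact: subvP.
      have hdot : forall y, dotM_sub R M N X Y' y -> y = 0.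
      { move=> y [hy hW].
        pose W := subT_ hY'.
        have kW : kills R M N W.
        { move=> f n Nn.
          pose F1 := mkLin (comp_lin f (subvL hY')).
          have hF1 : forall m', Tr M X (F1 m') by move=> m'; apply: hYT; exact: subvP.
          pose F' := liftL hT hF1.
          have FY : forall m', Y (F' m').
          { move=> m'; have [t [ht et]] := subvP (f m').
            suff -> : F' m' = t by [].
            apply: subv_inj; by rewrite liftLE mkLinE subvLE et. }
          have h := Nn F' FY.
          apply: subv_inj; rewrite subv0.
          have := liftLE hT hF1 n; rewrite h subv0 mkLinE subvLE; by move<-. }
        have := hW W kW (projS hY') (projS_hom hY').
        by move=> h; rewrite -(projSE hY' hy) h subv0. }
      case: (Xpr N Y' (ann_submod M Y) hY' hdot) => [hNX | hY0].
      -- move=> f; apply: hNX; exact: (dot_of_kill f hA).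
      -- exfalso; apply: hf0; apply: subv_inj; rewrite subv0; apply: hY0.
         by exists (f0 m0).
  + move=> m; split=> h; [apply: annXT; exact/hPX | apply/hPX; exact: annTX].
- case=> _ [_ [X [[G [h [hG hinj]]] [[Xhn Xb] hPX]]]].
  split; [exact hP | split; [exact hPp |]].
  exists X; split; last exact: hPX.
  split.
  + by case: Xhn => f [m fm]; exists (f m).
  + move=> N Y hN hY hNY.
    case: (classic (forall y, Y y -> y = 0)) => [hY0|hnz]; [by right|left].
    have [y [hy ynz]] : exists y, Y y /\ y <> 0.
    { apply: NNPP => hc; apply: hnz => y hy; apply: NNPP => ny; apply: hc; by exists y. }
    pose Ys := subT_ hY.
    have sig : in_sigma R M Ys.
    { exists G, (mkLin (comp_lin (subvL hY) h)); split => // s1 s2.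
      rewrite !mkLinE => /hinj; exact: subv_inj. }
    have nzY : exists x : Ys, x <> 0.
    { exists (mkS hY hy) => e; apply: ynz. by rewrite -(mkSE hY hy) e subv0. }
    have [f [m fm]] := hM Ys sig nzY.
    have hnzs : hom_nonzero_sub R M X Y.
    { exists (mkLin (comp_lin f (subvL hY))), m; split.
      - move=> m'; rewrite mkLinE subvLE; exact: subvP.
      - rewrite mkLinE subvLE => e; apply: fm; apply: subv_inj; by rewrite e subv0. }
    have hAnn := Xb Y hY hnzs.
    have NA : forall n, N n -> AnnM R M X n.
    { move=> n Nn; apply/hAnn => f' hf'. apply: hNY; split; first exact: hf'.
      move=> W kW g hg. have := kW (mkLin (comp_hom_lin hY hf' hg)) n Nn.
      by rewrite mkLinE. }
    move=> x hx. have := hx X _ (mkLin (idl X)). rewrite mkLinE; apply.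
    move=> f' n Nn; exact: NA.
Qed.
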